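(* Let $G$ be a group, $S\subset G$ a symmetric determining set, and $H\triangleleft G$ a normal subgroup of finite index. If $S$ intersects each coset of $H$ in $G$, then $(S^3\cap H)^2$ is a determining set of $H$.
   Context: $S^k:=\{s_1\cdots s_k: s_j\in S\}$. A generating subset $S$ of a group $G$ containing the identity is a determining set if $G$ has a presentation $\langle S\mid\mathcal{R}\rangle$ in which every relator is a word of length $3$ in the letters $S\cup S^{-1}$. *)

(* Defs.v *)
From Stdlib Require Import List Relations.
Import ListNotations.
Set Implicit Arguments.
Unset Strict Implicit.

Record Group := {
  carrier :> Type;
  gmul : carrier -> carrier -> carrier;
  gone : carrier;
  ginv : carrier -> carrier;
  gmulA : forall x y z, gmul x (gmul y z) = gmul (gmul x y) z;
  gmul1 : forall x, gmul gone x = x;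
  gmulV : forall x, gmul (ginv x) x = gone
}.

Section Defs.
Variable G : Group.

Definition is_subgroup (H : G -> Prop) : Prop :=
  H (@gone G) /\ (forall x y, H x -> H y -> H (@gmul G x y)) /\
  (forall x, H x -> H (@ginv G x)).

Definition is_normal (H : G -> Prop) : Prop :=
  forall g h, H h -> H (@gmul G (@gmul G g h) (@ginv G g)).

Definition finite_index (H : G -> Prop) : Prop :=
  exists l : list G, forall g, exists t, In t l /\ H (@gmul G (@ginv G t) g).

Definition symmetric_set (S : G -> Prop) : Prop :=
  forall s, S s -> S (@ginv G s).

Definition meets_every_coset (S H : G -> Prop) : Prop :=
  forall g, exists s, S s /\ H (@gmul G (@ginv G g) s).

Definition set_pow2 (S : G -> Prop) : G -> Prop :=
  fun x => exists a b, S a /\ S b /\ x = @gmul G a b.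
Definition set_pow3 (S : G -> Prop) : G -> Prop :=
  fun x => exists a b c, S a /\ S b /\ S c /\ x = @gmul G (@gmul G a b) c.
Definition setI (A B : G -> Prop) : G -> Prop := fun x => A x /\ B x.

(** Words in the letters S ∪ S^{-1}: a letter (x, b) stands for the
    generator symbol x (b = false) or its formal inverse (b = true). *)
Definition letter := (G * bool)%type.
Definition eval_letter (l : letter) : G :=
  if snd l then @ginv G (fst l) else fst l.
Definition eval (w : list letter) : G :=
  fold_right (fun l acc => @gmul G (eval_letter l) acc) (@gone G) w.
Definition word_over (S : G -> Prop) (w : list letter) : Prop :=
  forall l, In l w -> S (fst l).

Inductive elem_move (S : G -> Prop) (R : list letter -> Prop)
  : list letter -> list letter -> Prop :=
| mv_free : forall u v x b, S x ->
    elem_move S R (u ++ [(x, b); (x, negb b)] ++ v) (u ++ v)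
| mv_rel : forall u v r, R r -> elem_move S R (u ++ r ++ v) (u ++ v).

(** Equality in the group <S | R>  (Dehn/Tietze description of F(S)/<<R>>). *)
Definition pres_equiv (S : G -> Prop) (R : list letter -> Prop) :=
  clos_refl_sym_trans (list letter) (elem_move S R).

(** <S | R> is a presentation of the group H ⊆ G (with H's operations
    inherited from G): S ⊆ H, the relators are words over S that hold in G,
    S generates H, and every word over S trivial in G is a consequence of R,
    i.e. the natural map F(S) -> H is onto with kernel the normal closure
    of R. *)
Definition is_presentation (H S : G -> Prop) (R : list letter -> Prop) : Prop :=
  (forall x, S x -> H x) /\
  (forall r, R r -> word_over S r /\ eval r = @gone G) /\
  (forall h, H h -> exists w, word_over S w /\ eval w = h) /\
  (forall w, word_over S w -> eval w = @gone G -> pres_equiv S R w []).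

Definition determining_set (H S : G -> Prop) : Prop :=
  S (@gone G) /\
  exists R : list letter -> Prop,
    (forall r, R r -> length r = 3) /\ is_presentation H S R.

End Defs.

(* Main.v *)
Require Import Defs.
From Stdlib Require Import List Relations.
Import ListNotations.

Section GL.
Variable G : Group.
Local Notation "x * y" := (@gmul G x y).
Local Notation "x ^-1" := (@ginv G x) (at level 3).
Local Notation e := (@gone G).
Lemma mulA' (x y z : G) : (x * y) * z = x * (y * z).
Proof. now rewrite gmulA. Qed.
Lemma mul1l (x : G) : e * x = x. Proof. apply gmul1. Qed.
Lemma mulVl (x : G) : x^-1 * x = e. Proof. apply gmulV. Qed.
Lemma mulKl (x y : G) : x^-1 * (x * y) = y.
Proof. now rewrite gmulA, gmulV, gmul1. Qed.
Lemma mulVr (x : G) : x * x^-1 = e.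
Proof.
  rewrite <- (gmul1 (x * x^-1)).
  rewrite <- (gmulV (x^-1)) at 1.
  rewrite <- gmulA. rewrite (mulKl x (x^-1)). apply gmulV.
Qed.
Lemma mul1r (x : G) : x * e = x.
Proof. rewrite <- (gmulV x), gmulA, mulVr. apply gmul1. Qed.
Lemma mulKr (x y : G) : x * (x^-1 * y) = y.
Proof. now rewrite gmulA, mulVr, gmul1. Qed.
Lemma inv_uniq (x y : G) : x * y = e -> y = x^-1.
Proof. intro h. rewrite <- (mulKl x y), h. apply mul1r. Qed.
Lemma invK (x : G) : (x^-1)^-1 = x.
Proof. symmetry. apply inv_uniq. apply gmulV. Qed.
Lemma inv1 : e^-1 = e.
Proof. symmetry. apply inv_uniq. apply gmul1. Qed.
Lemma invM (x y : G) : (x * y)^-1 = y^-1 * x^-1.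
Proof. symmetry. apply inv_uniq. rewrite mulA', mulKr. apply mulVr. Qed.
End GL.
Global Hint Rewrite mulA' mul1l mulVl mul1r mulVr mulKl mulKr invK inv1 invM : grp.
Ltac gs := autorewrite with grp; try reflexivity.
Ltac gsin H := autorewrite with grp in H.
From Stdlib Require Import Classical ClassicalEpsilon.

Lemma ev_false (G : Group) (x : G) : eval_letter (x, false) = x.
Proof. reflexivity. Qed.
Lemma ev_true (G : Group) (x : G) : eval_letter (x, true) = ginv x.
Proof. reflexivity. Qed.
Global Hint Rewrite ev_false ev_true : grp.

Section PE.
Variable G : Group.
Variable S : G -> Prop.
Variable R : list (letter G) -> Prop.

Lemma em_app_l w u v : elem_move S R u v -> elem_move S R (w ++ u) (w ++ v).
Proof.
  intro h; destruct h.
  - rewrite !app_assoc. rewrite <- (app_assoc (w ++ u)). constructor; auto.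
  - rewrite !app_assoc. rewrite <- (app_assoc (w ++ u)). constructor; auto.
Qed.
Lemma em_app_r w u v : elem_move S R u v -> elem_move S R (u ++ w) (v ++ w).
Proof.
  intro h; destruct h.
  - rewrite <- !app_assoc. constructor; auto.
  - rewrite <- !app_assoc. constructor; auto.
Qed.
Lemma pe_app_l w u v : pres_equiv S R u v -> pres_equiv S R (w ++ u) (w ++ v).
Proof.
  induction 1.
  - apply rst_step. now apply em_app_l.
  - apply rst_refl.
  - now apply rst_sym.
  - eapply rst_trans; eauto.
Qed.
Lemma pe_app_r w u v : pres_equiv S R u v -> pres_equiv S R (u ++ w) (v ++ w).
Proof.
  induction 1.
  - apply rst_step. now apply em_app_r.
  - apply rst_refl.
  - now apply rst_sym.
  - eapply rst_trans; eauto.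
Qed.
Lemma pe_app u u' v v' : pres_equiv S R u u' -> pres_equiv S R v v' ->
  pres_equiv S R (u ++ v) (u' ++ v').
Proof.
  intros h1 h2. eapply rst_trans. apply pe_app_r, h1. apply pe_app_l, h2.
Qed.
Lemma pe_trans u v w : pres_equiv S R u v -> pres_equiv S R v w -> pres_equiv S R u w.
Proof. apply rst_trans. Qed.
Lemma pe_sym u v : pres_equiv S R u v -> pres_equiv S R v u.
Proof. apply rst_sym. Qed.
Lemma pe_refl u : pres_equiv S R u u.
Proof. apply rst_refl. Qed.
End PE.

Section Main.
Variable G : Group.
Local Notation "x * y" := (@gmul G x y).
Local Notation "x ^-1" := (@ginv G x) (at level 3).
Local Notation e := (@gone G).
Local Notation ev := (@eval_letter G).
Variables S H : G -> Prop.
Hypothesis Ssym : symmetric_set S.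
Hypothesis Se : S e.
Variable RS : list (letter G) -> Prop.
Hypothesis RS3 : forall r, RS r -> length r = 3.
Hypothesis RSok : forall r, RS r -> word_over S r /\ eval r = e.
Hypothesis Hsub : is_subgroup H.
Hypothesis Hnorm : is_normal H.
Hypothesis Hmeet : meets_every_coset S H.

Lemma H1 : H e. Proof. apply Hsub. Qed.
Lemma HM x y : H x -> H y -> H (x * y). Proof. apply Hsub. Qed.
Lemma HV x : H x -> H (x^-1). Proof. apply Hsub. Qed.

Lemma r_ex g : exists y, S y /\ H (g^-1 * y) /\ (H g -> y = e).
Proof.
  destruct (classic (H g)) as [hg|hg].
  - exists e. split; [auto|split; [rewrite mul1r; now apply HV | auto]].
  - destruct (Hmeet g) as [s [Ss Hs]]. exists s. tauto.
Qed.
Definition r g := proj1_sig (constructive_indefinite_description _ (r_ex g)).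
Lemma r_S g : S (r g). Proof. exact (proj1 (proj2_sig (constructive_indefinite_description _ (r_ex g)))). Qed.
Lemma r_H g : H (g^-1 * r g). Proof. exact (proj1 (proj2 (proj2_sig (constructive_indefinite_description _ (r_ex g))))). Qed.
Lemma r_e g : H g -> r g = e. Proof. exact (proj2 (proj2 (proj2_sig (constructive_indefinite_description _ (r_ex g))))). Qed.

Definition T := set_pow2 (setI (set_pow3 S) H).
Definition RT (w : list (letter G)) := length w = 3 /\ word_over T w /\ eval w = e.
Local Notation "u ~ v" := (pres_equiv T RT u v) (at level 70).

Lemma T_of x : set_pow3 S x -> H x -> T x.
Proof.
  intros h1 h2. exists x, e. split; [split; auto|split; [|now rewrite mul1r]].
  split; [exists e, e, e; repeat split; auto; now rewrite !mul1l | apply H1].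
Qed.
Lemma Te : T e. Proof. apply T_of; [exists e, e, e; repeat split; auto; now rewrite !mul1l|apply H1]. Qed.
Lemma T_H x : T x -> H x.
Proof. intros [a [b [[_ ha] [[_ hb] ->]]]]. now apply HM. Qed.

Lemma Sev l : S (fst l) -> S (ev l).
Proof. destruct l as [x []]; simpl; intro h; [apply Ssym|]; auto. Qed.

Definition Y c l := (r c * ev l) * (r (c * ev l))^-1.
Fixpoint rho c (w : list (letter G)) := match w with
  | [] => [] | l :: w' => (Y c l, false) :: rho (c * ev l) w' end.
Fixpoint cfin c (w : list (letter G)) := match w with
  | [] => c | l :: w' => cfin (c * ev l) w' end.

Lemma cfin_eval c w : cfin c w = c * eval w.
Proof. revert c; induction w as [|l w IH]; intro c; simpl. now rewrite mul1r. rewrite IH. gs. Qed.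
Lemma cfin_app c u v : cfin c (u ++ v) = cfin (cfin c u) v.
Proof. revert c; induction u as [|l u IH]; intro c; simpl; auto. Qed.
Lemma rho_app c u v : rho c (u ++ v) = rho c u ++ rho (cfin c u) v.
Proof. revert c; induction u as [|l u IH]; intro c; simpl; auto. now rewrite IH. Qed.

Lemma YH c x : H ((r c * x) * (r (c * x))^-1).
Proof.
  pose proof (r_H c) as p. pose proof (r_H (c * x)) as q.
  assert (E : (r c * x) * (r (c * x))^-1 =
     (c * (c^-1 * r c) * c^-1) * ((c * x) * ((c * x)^-1 * r (c * x))^-1 * (c * x)^-1)) by gs.
  rewrite E. apply HM; apply Hnorm; auto. now apply HV.
Qed.
Lemma TY c l : S (fst l) -> T (Y c l).
Proof.
  intro h. apply T_of. exists (r c), (ev l), ((r (c * ev l))^-1). repeat split; auto.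
  apply r_S. now apply Sev. apply Ssym, r_S. apply YH.
Qed.
Lemma rho_over c w : word_over S w -> word_over T (rho c w).
Proof.
  revert c; induction w as [|l w IH]; intros c h; simpl. intros l [].
  intros l' [<-|i]. apply TY, h; now left. apply (IH (c * ev l)); auto.
  intros l'' i'; apply h; now right.
Qed.
Lemma eval_rho c w : eval (rho c w) = r c * eval w * (r (cfin c w))^-1.
Proof.
  revert c; induction w as [|l w IH]; intro c; simpl. gs.
  rewrite IH. unfold Y. gs.
Qed.

Lemma ev_flip x b : ev (x, negb b) = (ev (x, b))^-1.
Proof. destruct b; simpl; gs. Qed.

Lemma tri l1 l2 l3 : T (fst l1) -> T (fst l2) -> T (fst l3) -> ev l1 * ev l2 = ev l3 ->
  [l1; l2] ~ [l3].
Proof.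
  intros t1 t2 t3 E. destruct l3 as [x b].
  apply pe_trans with ([l1; l2] ++ [(x, negb b); (x, negb (negb b))] ++ []).
  - apply pe_sym, rst_step. rewrite <- (app_nil_r [l1; l2]) at 2. now constructor.
  - rewrite Bool.negb_involutive. simpl.
    assert (M : elem_move T RT ([] ++ [l1; l2; (x, negb b)] ++ [(x, b)]) ([] ++ [(x, b)])).
    { constructor. split; [reflexivity|split].
      - intros l [<-|[<-|[<-|[]]]]; auto.
      - simpl. rewrite ev_flip, <- E. gs. }
    now apply rst_step.
Qed.

Lemma Ee : [(e, false)] ~ [].
Proof.
  apply pe_trans with [(e, false); (e, false); (e, true)].
  - apply pe_sym, rst_step.
    assert (M : elem_move T RT ([(e,false)] ++ [(e, false); (e, negb false)] ++ []) ([(e,false)] ++ []))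
      by (constructor; apply Te).
    exact M.
  - apply rst_step.
    assert (M : elem_move T RT ([] ++ [(e, false); (e, false); (e, true)] ++ []) ([] ++ [])).
    { constructor. split; [reflexivity|split].
      - intros l [<-|[<-|[<-|[]]]]; apply Te.
      - simpl. gs. }
    exact M.
Qed.


Lemma L3 c l1 l2 l3 : H c -> S (fst l1) -> S (fst l2) -> S (fst l3) ->
  H (ev l1 * ev l2 * ev l3) ->
  rho c [l1; l2; l3] ~ [(ev l1 * ev l2 * ev l3, false)].
Proof.
  intros hc s1 s2 s3 hp. simpl.
  apply pe_trans with ([(Y c l1 * Y (c * ev l1) l2, false)] ++ [(Y (c * ev l1 * ev l2) l3, false)]).
  - change (([(Y c l1, false); (Y (c * ev l1) l2, false)] ++ [(Y (c * ev l1 * ev l2) l3, false)]) ~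
      ([(Y c l1 * Y (c * ev l1) l2, false)] ++ [(Y (c * ev l1 * ev l2) l3, false)])).
    apply pe_app; [|apply pe_refl].
    apply tri; simpl; try (apply TY; auto); auto.
    apply T_of; [|apply HM; apply YH].
    unfold Y. rewrite (r_e c hc).
    exists (ev l1), (ev l2), ((r (c * ev l1 * ev l2))^-1). repeat split; try apply Sev; auto.
    apply Ssym, r_S. gs.
  - apply tri; simpl.
    + apply T_of; [|apply HM; apply YH].
      unfold Y. rewrite (r_e c hc).
      exists (ev l1), (ev l2), ((r (c * ev l1 * ev l2))^-1). repeat split; try apply Sev; auto.
      apply Ssym, r_S. gs.
    + apply TY; auto.
    + apply T_of; auto. exists (ev l1), (ev l2), (ev l3). repeat split; apply Sev; auto.
    + unfold Y. assert (hc3 : H (c * ev l1 * ev l2 * ev l3)).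
      { assert (E : c * ev l1 * ev l2 * ev l3 = c * (ev l1 * ev l2 * ev l3)) by gs.
        rewrite E. now apply HM. }
      rewrite (r_e c hc), (r_e _ hc3). gs.
Qed.

Lemma Lrel c l1 l2 l3 : S (fst l1) -> S (fst l2) -> S (fst l3) ->
  eval [l1; l2; l3] = e -> rho c [l1; l2; l3] ~ [].
Proof.
  intros s1 s2 s3 E. simpl in E. simpl.
  assert (E12 : ev l1 * ev l2 = (ev l3)^-1).
  { assert (F : ev l1 * ev l2 = (ev l1 * (ev l2 * (ev l3 * e))) * (ev l3)^-1) by gs.
    rewrite E in F. rewrite F. gs. }
  assert (Ec : c * ev l1 * ev l2 * ev l3 = c).
  { assert (F : c * ev l1 * ev l2 * ev l3 = c * (ev l1 * (ev l2 * (ev l3 * e)))) by gs.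
    rewrite F, E. gs. }
  assert (Q : Y c l1 * Y (c * ev l1) l2 = r c * (ev l1 * ev l2) * (r (c * ev l1 * ev l2))^-1)
    by (unfold Y; gs).
  assert (TQ : T (Y c l1 * Y (c * ev l1) l2)).
  { apply T_of; [|apply HM; apply YH]. rewrite Q, E12.
    exists (r c), ((ev l3)^-1), ((r (c * ev l1 * ev l2))^-1). repeat split.
    apply r_S. apply Ssym, Sev; auto. apply Ssym, r_S. }
  apply pe_trans with ([(Y c l1 * Y (c * ev l1) l2, false)] ++ [(Y (c * ev l1 * ev l2) l3, false)]).
  - change (([(Y c l1, false); (Y (c * ev l1) l2, false)] ++ [(Y (c * ev l1 * ev l2) l3, false)]) ~
      ([(Y c l1 * Y (c * ev l1) l2, false)] ++ [(Y (c * ev l1 * ev l2) l3, false)])).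
    apply pe_app; [|apply pe_refl].
    apply tri; simpl; try (apply TY; auto); auto.
  - apply pe_trans with [(e, false)]; [|apply Ee].
    apply tri; simpl; auto. apply TY; auto. apply Te.
    rewrite Q. unfold Y. rewrite Ec, E12. gs.
Qed.

Lemma Lfree c x b : S x -> rho c [(x, b); (x, negb b)] ~ [].
Proof.
  intro sx. simpl.
  apply pe_trans with [(e, false)]; [|apply Ee].
  apply tri; simpl; try (apply TY; auto); try apply Te.
  unfold Y. destruct b; simpl; gs.
Qed.

Lemma moves w1 w2 : elem_move S RS w1 w2 -> forall c, rho c w1 ~ rho c w2.
Proof.
  intros m c. destruct m as [u v x b sx | u v rr hr].
  - rewrite !rho_app. apply pe_app; [apply pe_refl|].
    assert (Ec : cfin (cfin c u) [(x, b); (x, negb b)] = cfin c u)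
      by (destruct b; simpl; gs).
    rewrite Ec. change (rho (cfin c u) v) with ([] ++ rho (cfin c u) v).
    apply pe_app; [apply Lfree; auto|apply pe_refl].
  - rewrite !rho_app. apply pe_app; [apply pe_refl|].
    destruct (RSok rr hr) as [wo ev0].
    assert (Ec : cfin (cfin c u) rr = cfin c u) by (rewrite cfin_eval, ev0; gs).
    rewrite Ec. change (rho (cfin c u) v) with ([] ++ rho (cfin c u) v).
    apply pe_app; [|apply pe_refl].
    pose proof (RS3 rr hr) as len.
    destruct rr as [|l1 [|l2 [|l3 [|]]]]; try discriminate.
    apply Lrel; auto; apply wo; simpl; auto.
Qed.

Lemma moves_star w1 w2 : pres_equiv S RS w1 w2 -> forall c, rho c w1 ~ rho c w2.
Proof.
  induction 1; intro c.
  - now apply moves.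
  - apply pe_refl.
  - now apply pe_sym.
  - eapply pe_trans; eauto.
Qed.

Definition spec6 (t : G) (p : G * G * G * G * G * G) : Prop :=
  let '(u1, u2, u3, v1, v2, v3) := p in
  S u1 /\ S u2 /\ S u3 /\ S v1 /\ S v2 /\ S v3 /\
  H (u1 * u2 * u3) /\ H (v1 * v2 * v3) /\ t = (u1 * u2 * u3) * (v1 * v2 * v3).

Lemma dec_ex t : exists p, T t -> spec6 t p.
Proof.
  destruct (classic (T t)) as [ht|ht].
  - destruct ht as [a [b [[[u1 [u2 [u3 [h1 [h2 [h3 ->]]]]]] ha] [[[v1 [v2 [v3 [k1 [k2 [k3 ->]]]]]] hb] ->]]]].
    exists (u1, u2, u3, v1, v2, v3). intros _. simpl. tauto.
  - exists (e, e, e, e, e, e). tauto.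
Qed.
Definition dec t := proj1_sig (constructive_indefinite_description _ (dec_ex t)).
Definition sig (l : letter G) : list (letter G) :=
  let '(u1, u2, u3, v1, v2, v3) := dec (fst l) in
  if snd l then [(v3, true); (v2, true); (v1, true); (u3, true); (u2, true); (u1, true)]
  else [(u1, false); (u2, false); (u3, false); (v1, false); (v2, false); (v3, false)].

Lemma sig_ok c l : H c -> T (fst l) ->
  word_over S (sig l) /\ cfin c (sig l) = c * ev l /\ rho c (sig l) ~ [l].
Proof.
  intros hc ht. destruct l as [t b]. unfold sig. simpl fst in *. simpl snd.
  pose proof (proj2_sig (constructive_indefinite_description _ (dec_ex t)) ht) as sp.
  change (spec6 t (dec t)) in sp.
  destruct (dec t) as [[[[[u1 u2] u3] v1] v2] v3].
  unfold spec6 in sp. cbv iota beta in *.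
  destruct sp as [s1 [s2 [s3 [s4 [s5 [s6 [ha [hb et]]]]]]]].
  destruct b.
  - split; [intros l i; simpl in i; intuition (subst; simpl; auto)|split].
    + rewrite cfin_eval. simpl. rewrite et. gs.
    + change [(v3, true); (v2, true); (v1, true); (u3, true); (u2, true); (u1, true)]
        with ([(v3, true); (v2, true); (v1, true)] ++ [(u3, true); (u2, true); (u1, true)]).
      rewrite rho_app.
      assert (hb' : H (v3^-1 * v2^-1 * v1^-1)).
      { assert (F : v3^-1 * v2^-1 * v1^-1 = (v1 * v2 * v3)^-1) by gs. rewrite F. now apply HV. }
      assert (ha' : H (u3^-1 * u2^-1 * u1^-1)).
      { assert (F : u3^-1 * u2^-1 * u1^-1 = (u1 * u2 * u3)^-1) by gs. rewrite F. now apply HV. }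
      eapply pe_trans.
      * apply pe_app; apply L3; simpl; auto.
        match goal with |- H ?X => assert (F : X = c * (v3^-1 * v2^-1 * v1^-1)) by (simpl; gs) end.
        rewrite F. now apply HM.
      * simpl. apply tri; simpl.
        -- apply T_of; auto. exists (v3^-1), (v2^-1), (v1^-1). repeat split; now apply Ssym.
        -- apply T_of; auto. exists (u3^-1), (u2^-1), (u1^-1). repeat split; now apply Ssym.
        -- exact ht.
        -- rewrite et. gs.
  - split; [intros l i; simpl in i; intuition (subst; simpl; auto)|split].
    + rewrite cfin_eval. simpl. rewrite et. gs.
    + change [(u1, false); (u2, false); (u3, false); (v1, false); (v2, false); (v3, false)]
        with ([(u1, false); (u2, false); (u3, false)] ++ [(v1, false); (v2, false); (v3, false)]).
      rewrite rho_app.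
      eapply pe_trans.
      * apply pe_app; apply L3; simpl; auto.
        match goal with |- H ?X => assert (F : X = c * (u1 * u2 * u3)) by (simpl; gs) end.
        rewrite F. now apply HM.
      * simpl. apply tri; simpl.
        -- apply T_of; auto. exists u1, u2, u3. repeat split; auto.
        -- apply T_of; auto. exists v1, v2, v3. repeat split; auto.
        -- exact ht.
        -- rewrite et. gs.
Qed.

Lemma stepA w : word_over T w -> forall c, H c ->
  word_over S (flat_map sig w) /\ cfin c (flat_map sig w) = c * eval w /\
  rho c (flat_map sig w) ~ w.
Proof.
  induction w as [|l w IH]; intros hw c hc; simpl.
  - split; [intros l []|split; [gs|apply pe_refl]].
  - assert (hl : T (fst l)) by (apply hw; now left).
    assert (hw' : word_over T w) by (intros l' i; apply hw; now right).
    destruct (sig_ok c l hc hl) as [o1 [c1 p1]].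
    assert (hc' : H (c * ev l)).
    { apply HM; auto. destruct l as [x []]; simpl; [apply HV|]; apply T_H; auto. }
    destruct (IH hw' _ hc') as [o2 [c2 p2]].
    split; [|split].
    + intros l' i. apply in_app_iff in i. destruct i; auto.
    + rewrite cfin_app, c1, c2. gs.
    + rewrite rho_app, c1. change (l :: w) with ([l] ++ w). now apply pe_app.
Qed.

Lemma final :
  (forall h, exists w, word_over S w /\ eval w = h) ->
  (forall w, word_over S w -> eval w = e -> pres_equiv S RS w []) ->
  determining_set H T.
Proof.
  intros Sgen Scomp. split; [apply Te|]. exists RT. split; [intros rr [h _]; exact h|].
  split; [exact T_H|split; [intros rr [_ h]; exact h|split]].
  - intros h hh. destruct (Sgen h) as [W [oW eW]].
    exists (rho e W). split; [now apply rho_over|].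
    rewrite eval_rho, cfin_eval, eW.
    rewrite (r_e e H1), (r_e (e * h)); [gs|]. now rewrite mul1l.
  - intros w ow ew.
    destruct (stepA w ow e H1) as [o1 [c1 p1]].
    rewrite cfin_eval, ew in c1.
    assert (es : eval (flat_map sig w) = e).
    { rewrite !mul1l in c1. exact c1. }
    pose proof (moves_star _ _ (Scomp _ o1 es) e) as m. simpl in m.
    apply pe_trans with (rho e (flat_map sig w)); [now apply pe_sym|exact m].
Qed.
End Main.

Theorem mainTheorem16 (G : Group) (S H : G -> Prop) :
  symmetric_set S ->
  determining_set (fun _ : G => True) S ->
  is_subgroup H -> is_normal H -> finite_index H ->
  meets_every_coset S H ->
  determining_set H (set_pow2 (setI (set_pow3 S) H)).
Proof.
  intros Ssym [Se [RS [RS3 [_ [RSok [Sgen Scomp]]]]]] Hsub Hnorm _ Hmeet.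
  apply (final G S H Ssym Se RS RS3 RSok Hsub Hnorm Hmeet).
  - intro h. destruct (Sgen h I) as [w hw]. now exists w.
  - exact Scomp.
Qed.
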